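(* Let $R$ be a commutative ring in which $2$ is invertible, $I$ an ideal of $R$, $m\ge1$, and let $(Q,q)$ be a quadratic space over $R$ of rank $2m-1$ having an ordered basis $\mathcal{B}$ with respect to which the matrix of $\langle\,,\,\rangle$ is $(2)\perp\widetilde{\psi}_{m-1}$. Identify automorphisms of $Q\perp\mathbb{H}(R)$ with matrices in $\mathrm{GL}_{2m+1}(R)$ via the ordered basis $\mathcal{B}$ followed by $x,f$ (with respect to which the form has matrix $(2)\perp\widetilde{\psi}_m$). Then $\mathrm{EO}_{(R,I)}(Q,\mathbb{H}(R))=\mathrm{EO}_{2m+1}(R,I)$.
   Context: For a quadratic form $q$ the bilinear form is $\langle x,y\rangle=q(x+y)-q(x)-q(y)$ (so $\langle x,x\rangle=2q(x)$); a quadratic space is a finitely generated projective module with non-degenerate such form ($z\mapsto\langle z,-\rangle$ an isomorphism onto the dual). $\mathbb{H}(R)=Rx\oplus Rf$ with $q(ax+bf)=ab$; orthogonal sums carry the sum of forms. $\widetilde{\psi}_s=\sum_{i=1}^s(e_{2i-1,2i}+e_{2i,2i-1})$ ($e_{i,j}$ matrix units; $\widetilde\psi_0$ is empty). DSER transformations on $Q\perp\mathbb{H}(P)$ ($\mathbb{H}(P)=P\oplus P^*$, $q(y,g)=g(y)$): for $\alpha:Q\to P$ let $\alpha^*:P^*\to Q$ satisfy $\langle\alpha^*(g),z\rangle=g(\alpha(z))$, $E_\alpha(z,y,g)=(z-\alpha^*(g),y+\alpha(z)-\tfrac12\alpha\alpha^*(g),g)$; for $\beta:Q\to P^*$ let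 $\beta^*:P\to Q$ satisfy $\langle\beta^*(y),z\rangle=\beta(z)(y)$, $E^*_\beta(z,y,g)=(z-\beta^*(y),y,g+\beta(z)-\tfrac12\beta\beta^*(y))$. $\mathrm{EO}_R(Q,\mathbb{H}(P))$ is generated by all $E_\alpha,E^*_\beta$; $\mathrm{EO}_I(Q,\mathbb{H}(P))$ by those with $\alpha(Q)\subseteq IP$, $\beta(Q)\subseteq IP^*$; $\mathrm{EO}_{(R,I)}(Q,\mathbb{H}(P))$ is its normal closure in $\mathrm{EO}_R(Q,\mathbb{H}(P))$. Odd elementary orthogonal group: for $N=2s+1$ and $1\le i\le s$, $F^1_i(\lambda)=I_N+\lambda(e_{1,2i+1}-2e_{2i,1}-\lambda e_{2i,2i+1})$, $F^2_i(\lambda)=I_N+\lambda(e_{1,2i}-2e_{2i+1,1}-\lambda e_{2i+1,2i})$. $\mathrm{EO}_{2s+1}(R)$ is generated by these with $\lambda\in R$, $\mathrm{EO}_{2s+1}(I)$ by those with $\lambda\in I$, and $\mathrm{EO}_{2s+1}(R,I)$ is the normal closure of $\mathrm{EO}_{2s+1}(I)$ in $\mathrm{EO}_{2s+1}(R)$. *)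

(* Defs.v *)
From HB Require Import structures.
From mathcomp Require Import all_boot all_order all_algebra.
Unset Printing Implicit Defensive.
Import Order.TTheory GRing.Theory Num.Theory.
Local Open Scope ring_scope.

Section Defs.
Variable R : comUnitRingType.

Inductive gen_grp {n : nat} (S : 'M[R]_n -> Prop) : 'M[R]_n -> Prop :=
| gen_one : gen_grp S 1%:M
| gen_mulS s g : S s -> gen_grp S g -> gen_grp S (s *m g)
| gen_mulSV s g : S s -> gen_grp S g -> gen_grp S (invmx s *m g).

Definition normal_closure {n : nat} (G H : 'M[R]_n -> Prop) : 'M[R]_n -> Prop :=
  gen_grp (fun x => exists g h, G g /\ H h /\ x = g *m h *m invmx g).

(* Indices are 0-based: the paper's e_{p,q} is entry (p-1, q-1). *)
Definition F1 (s i : nat) (l : R) : 'M[R]_((2 * s).+1) :=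
  \matrix_(r, c) (((r : nat) == c)%:R
     + l * ((((r : nat) == 0%N) && ((c : nat) == 2 * i)%N)%:R
            - 2%:R * ((((r : nat) == (2 * i).-1) && ((c : nat) == 0%N)))%:R
            - l * ((((r : nat) == (2 * i).-1) && ((c : nat) == 2 * i)%N))%:R)).

Definition F2 (s i : nat) (l : R) : 'M[R]_((2 * s).+1) :=
  \matrix_(r, c) (((r : nat) == c)%:R
     + l * ((((r : nat) == 0%N) && ((c : nat) == (2 * i).-1))%:R
            - 2%:R * ((((r : nat) == 2 * i)%N && ((c : nat) == 0%N)))%:R
            - l * ((((r : nat) == 2 * i)%N && ((c : nat) == (2 * i).-1)))%:R)).

Definition EO_odd_gens (s : nat) (P : R -> Prop) (M : 'M[R]_((2 * s).+1)) : Prop :=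
  exists i l, [/\ (1 <= i <= s)%N, P l & (M = F1 s i l \/ M = F2 s i l)].

Definition EO_odd (s : nat) := gen_grp (EO_odd_gens s (fun _ => True)).
Definition EO_odd_ideal (s : nat) (I : {pred R}) := gen_grp (EO_odd_gens s (fun l => l \in I)).
Definition EO_odd_rel (s : nat) (I : {pred R}) := normal_closure (EO_odd s) (EO_odd_ideal s I).

(* Q = R^(2m-1) with basis B; Gram matrix of <,> is (2) ⊥ psi_{m-1}.
   Q ⊥ H(R) = R^(2m+1) with ordered basis B, x, f; coordinates (z; y; g). *)
Definition nQ (m : nat) := (2 * m - 1)%N.
Definition idx_x (m : nat) := (2 * m - 1)%N.
Definition idx_f (m : nat) := (2 * m)%N.

(* entry (i,j) (0-based, after the leading (2)) of psi-block *)
Definition psi_entry (i j : nat) : bool :=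
  (odd i && (j == i.+1)) || (odd j && (i == j.+1)).

Definition GQ (m : nat) : 'M[R]_(nQ m) :=
  \matrix_(i, j) (if ((i : nat) == 0%N) && ((j : nat) == 0%N) then 2%:R
                  else (psi_entry i j)%:R).

Definition bilQ {m : nat} (u v : 'cV[R]_(nQ m)) : R := (u^T *m GQ m *m v) 0 0.

Definition qcol {m : nat} (v : 'cV[R]_(nQ m)) (i : 'I_((2 * m).+1)) : R :=
  oapp (fun j : 'I_(nQ m) => v j 0) 0 (insub (i : nat)).
Definition qrow {m : nat} (a : 'rV[R]_(nQ m)) (i : 'I_((2 * m).+1)) : R :=
  oapp (fun j : 'I_(nQ m) => a 0 j) 0 (insub (i : nat)).

(* alpha : Q -> P = R given by z |-> a z, with alpha^*(g) = g w,
   where <w, z> = a z for all z (adjointness).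
   E_alpha(z,y,g) = (z - g w, y + a z - 1/2 (a w) g, g). *)
Definition E_alpha {m : nat} (a : 'rV[R]_(nQ m)) (w : 'cV[R]_(nQ m)) : 'M[R]_((2 * m).+1) :=
  \matrix_(r, c) (((r : nat) == c)%:R
     - (if (c : nat) == idx_f m then qcol w r else 0)
     + (if (r : nat) == idx_x m then
          qrow a c - (if (c : nat) == idx_f m then (2%:R)^-1 * (a *m w) 0 0 else 0)
        else 0)).

(* beta : Q -> P^* = R (identifying g with g(1)), z |-> b z, with
   beta^*(y) = y w where <w, z> = b z for all z.
   E*_beta(z,y,g) = (z - y w, y, g + b z - 1/2 (b w) y). *)
Definition E_beta {m : nat} (b : 'rV[R]_(nQ m)) (w : 'cV[R]_(nQ m)) : 'M[R]_((2 * m).+1) :=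
  \matrix_(r, c) (((r : nat) == c)%:R
     - (if (c : nat) == idx_x m then qcol w r else 0)
     + (if (r : nat) == idx_f m then
          qrow b c - (if (c : nat) == idx_x m then (2%:R)^-1 * (b *m w) 0 0 else 0)
        else 0)).

Definition EOQH_gens (m : nat) (P : R -> Prop) (M : 'M[R]_((2 * m).+1)) : Prop :=
  (exists a w, (forall z, bilQ w z = (a *m z) 0 0) /\
               (forall z : 'cV[R]_(nQ m), P ((a *m z) 0 0)) /\ M = E_alpha a w)
  \/
  (exists b w, (forall z, bilQ w z = (b *m z) 0 0) /\
               (forall z : 'cV[R]_(nQ m), P ((b *m z) 0 0)) /\ M = E_beta b w).

Definition EOQH (m : nat) := gen_grp (EOQH_gens m (fun _ => True)).
Definition EOQH_ideal (m : nat) (I : {pred R}) := gen_grp (EOQH_gens m (fun l => l \in I)).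
Definition EOQH_rel (m : nat) (I : {pred R}) := normal_closure (EOQH m) (EOQH_ideal m I).

End Defs.

(* Main.v *)
Require Import Defs.
From HB Require Import structures.
From mathcomp Require Import all_boot all_order all_algebra.
From mathcomp Require Import ring zify.
Import GRing.Theory.
Local Open Scope ring_scope.
Set Implicit Arguments. Unset Strict Implicit.

Lemma ringeq (T : comUnitRingType) (x y : T) : x = y -> x = y. Proof. by []. Qed.

Section Gen.
Variable R : comUnitRingType.
Variable n : nat.
Variable i0 : 'I_n.

Definition S1 (p q : 'I_n) (l : R) : 'M[R]_n :=
  1%:M + l *: delta_mx i0 q - (2%:R * l) *: delta_mx p i0 - (l ^+ 2) *: delta_mx p q.
Definition LL (p q x f : 'I_n) (l : R) : 'M[R]_n :=
  1%:M - l *: delta_mx p f + l *: delta_mx x q.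
Definition Egen (p q : 'I_n) (A : 'rV[R]_n) (W : 'cV[R]_n) (c : R) : 'M[R]_n :=
  1%:M - W *m delta_mx 0 q + delta_mx p 0 *m A - c *: (delta_mx p (0 : 'I_1) *m delta_mx 0 q).

Ltac mxstep := rewrite ?mulmxDl ?mulmxDr ?mulmxBl ?mulmxBr ?mulNmx ?mulmxN ?mul1mx ?mulmx1
  ?mul0mx ?mulmx0 ?scaler0 -?scalemxAl -?scalemxAr ?mulmxA ?mul_delta_mx_cond.
Ltac decb := repeat match goal with
 | |- context [?u == ?u] => rewrite eqxx
 | H : is_true (?u != ?v) |- context [?u == ?v] => rewrite (negbTE H)
 | H : is_true (?u != ?v) |- context [?v == ?u] => rewrite (eq_sym v u) (negbTE H)
 end.
Ltac mxsolve := rewrite /S1 /LL; do 6 (mxstep; decb; rewrite ?mulr0n ?mulr1n);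
  apply/matrixP => r c; rewrite !mxE; apply: (@ringeq R); ring.

Section Comm.
Variables p q x f : 'I_n.
Hypotheses (h1 : i0 != p) (h2 : i0 != q) (h3 : i0 != x) (h4 : i0 != f) (h5 : p != q)
  (h6 : p != x) (h7 : p != f) (h8 : q != x) (h9 : q != f) (h10 : x != f).

Lemma commA (a b : R) :
  S1 x f a *m S1 p q b = LL p q x f (- (2%:R * a * b)) *m S1 p q b *m S1 x f a.
Proof. mxsolve. Qed.
Lemma commB (a b : R) :
  S1 x f a *m LL p q f x b *m S1 x f (- a) =
  S1 p q (a * b) *m LL p q x f (- (a ^+ 2 * b)) *m LL p q f x b.
Proof. mxsolve. Qed.
Lemma LLinv l : LL p q x f l *m LL p q x f (- l) = 1%:M.
Proof. mxsolve. Qed.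
End Comm.

Lemma S1inv (p q : 'I_n) l : i0 != p -> i0 != q -> p != q -> S1 p q l *m S1 p q (- l) = 1%:M.
Proof. move=> h1 h2 h5; mxsolve. Qed.

Lemma Egen_mul p q A1 W1 c1 A2 W2 c2 : q != p ->
  delta_mx (0 : 'I_1) q *m W2 = 0 -> A1 *m delta_mx p (0 : 'I_1) = 0 ->
  Egen p q A1 W1 c1 *m Egen p q A2 W2 c2 =
  Egen p q (A1 + A2) (W1 + W2) (c1 + c2 + (A1 *m W2) 0 0).
Proof.
move=> qp hW hA.
have r1 : forall (Y : 'M[R]_(n, 1)), Y *m delta_mx 0 q *m W2 = 0.
  by move=> Y; rewrite -mulmxA hW mulmx0.
have r2 : forall (Y : 'M[R]_(n, 1)), Y *m delta_mx 0 q *m delta_mx p (0 : 'I_1) = 0.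
  by move=> Y; rewrite -mulmxA mul_delta_mx_cond (negbTE qp) mulr0n mulmx0.
have r3 : forall (Y : 'M[R]_(n, 1)), Y *m A1 *m delta_mx p (0 : 'I_1) = 0.
  by move=> Y; rewrite -mulmxA hA mulmx0.
have r4 : forall (Y : 'M[R]_(n, 1)), Y *m A1 *m W2 = (A1 *m W2) 0 0 *: Y.
  by move=> Y; rewrite -mulmxA {1}[A1 *m W2]mx11_scalar mul_mx_scalar.
rewrite /Egen.
do 4 (rewrite ?mulmxDl ?mulmxDr ?mulmxBl ?mulmxBr ?mulNmx ?mulmxN ?mul1mx ?mulmx1
  ?mul0mx ?mulmx0 ?scaler0 -?scalemxAl -?scalemxAr ?mulmxA ?r1 ?r2 ?r3 ?r4).
apply/matrixP => r c; rewrite !mxE !big_ord1 !mxE; apply: (@ringeq R); ring.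
Qed.

End Gen.

Definition partner (j : nat) : nat := if j == 0%N then 0%N else if odd j then j.+1 else j.-1.

Lemma parity j : (exists k, j = (k * 2).+1) \/ (exists k, j = k * 2).
Proof.
have := odd_double_half j; rewrite -muln2; case: (odd j) => /= H.
  by left; exists j./2; rewrite -[in LHS]H.
by right; exists j./2; rewrite -[in LHS]H.
Qed.

Lemma odd2 k : odd (k * 2) = false. Proof. by rewrite oddM andbF. Qed.

Lemma partner_odd k : partner (k * 2).+1 = (k * 2).+2.
Proof. by rewrite /partner /= odd2. Qed.
Lemma partner_even k : partner (k * 2) = (k * 2).-1.
Proof. by rewrite /partner odd2; case: k. Qed.

Lemma partner_lt m j : (j < nQ m)%N -> (partner j < nQ m)%N.
Proof. rewrite /nQ; case: (parity j) => [[k ->]|[k ->]]; rewrite ?partner_odd ?partner_even; lia. Qed.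

Lemma partner_inv j : partner (partner j) = j.
Proof.
case: (parity j) => [[k ->]|[k ->]].
  by rewrite partner_odd (_ : (k * 2).+2 = k.+1 * 2) ?partner_even //; lia.
case: k => [//|k]; rewrite partner_even (_ : (k.+1 * 2).-1 = (k * 2).+1) ?partner_odd //; lia.
Qed.

Lemma partner0 j : (partner j == 0)%N = (j == 0)%N.
Proof. case: (parity j) => [[k ->]|[k ->]]; rewrite ?partner_odd ?partner_even; lia. Qed.

Lemma psiE i j : psi_entry i j = (j != 0)%N && (i == partner j).
Proof.
rewrite /psi_entry; case: (parity i) => [[k ->]|[k ->]]; case: (parity j) => [[l ->]|[l ->]];
  rewrite ?partner_odd ?partner_even /= ?odd2 /=; repeat (case: eqP => /=); lia.
Qed.

Section Grp.
Variable R : comUnitRingType.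
Variable n : nat.
Implicit Types (S G H T : 'M[R]_n -> Prop).

Definition units S := forall M, S M -> M \in unitmx.
Definition closed T := [/\ T 1%:M, (forall A B, T A -> T B -> T (A *m B)) & (forall A, T A -> T (invmx A))].

Lemma gen_units S : units S -> units (gen_grp R S).
Proof.
move=> uS M; elim => [|s g Ss _ ug|s g Ss _ ug]; first exact: unitmx1.
  by rewrite unitmx_mul uS.
by rewrite unitmx_mul unitmx_inv uS.
Qed.

Lemma gen_mul S A B : gen_grp R S A -> gen_grp R S B -> gen_grp R S (A *m B).
Proof.
elim => [|s g Ss _ IH|s g Ss _ IH] gB; first by rewrite mul1mx.
  by rewrite -mulmxA; apply: gen_mulS => //; apply: IH.
by rewrite -mulmxA; apply: gen_mulSV => //; apply: IH.
Qed.

Lemma gen_in S s : S s -> gen_grp R S s.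
Proof. by move=> Ss; rewrite -[s]mulmx1; apply: gen_mulS => //; apply: gen_one. Qed.

Lemma gen_inV S s : S s -> gen_grp R S (invmx s).
Proof. by move=> Ss; rewrite -[invmx s]mulmx1; apply: gen_mulSV => //; apply: gen_one. Qed.

Lemma invmxM (A B : 'M[R]_n) : A \in unitmx -> B \in unitmx -> invmx (A *m B) = invmx B *m invmx A.
Proof.
move=> uA uB; have uAB : A *m B \in unitmx by rewrite unitmx_mul uA.
have H : (invmx B *m invmx A) *m (A *m B) = 1%:M.
  by rewrite mulmxA -(mulmxA (invmx B)) mulVmx // mulmx1 mulVmx.
by rewrite -[invmx (A *m B)]mul1mx -H -mulmxA mulmxV // mulmx1.
Qed.

Lemma gen_inv S A : units S -> gen_grp R S A -> gen_grp R S (invmx A).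
Proof.
move=> uS; elim => [|s g Ss gg IH|s g Ss gg IH]; first by rewrite invmx1; apply: gen_one.
  have ug := gen_units uS gg; have us := uS _ Ss.
  by rewrite invmxM //; apply: gen_mul => //; apply: gen_inV.
have ug := gen_units uS gg; have us := uS _ Ss.
rewrite invmxM ?unitmx_inv // invmxK; apply: gen_mul => //; exact: gen_in.
Qed.

Lemma gen_closed S : units S -> closed (gen_grp R S).
Proof. move=> uS; split; [exact: gen_one | exact: gen_mul | move=> A; exact: gen_inv]. Qed.

Lemma gen_sub S T : closed T -> (forall s, S s -> T s) -> forall A, gen_grp R S A -> T A.
Proof.
case=> T1 TM TV sST A; elim => [//|s g Ss _ IH|s g Ss _ IH]; first by apply: TM => //; apply: sST.
by apply: TM => //; apply: TV; apply: sST.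
Qed.

Lemma nc_units G H : units G -> units H -> units (normal_closure R G H).
Proof.
move=> uG uH; apply: gen_units => M [g [h [Gg [Hh ->]]]].
by rewrite !unitmx_mul unitmx_inv uG // uH.
Qed.

Lemma nc_closed G H : units G -> units H -> closed (normal_closure R G H).
Proof.
move=> uG uH; split; [exact: gen_one | exact: gen_mul | ].
move=> A; apply: gen_inv => M [g [h [Gg [Hh ->]]]].
by rewrite !unitmx_mul unitmx_inv uG // uH.
Qed.

Lemma nc_sub G H : closed G -> H 1%:M -> forall h, H h -> normal_closure R G H h.
Proof.
case=> G1 _ _ _ h Hh; apply: gen_in; exists 1%:M, h; split => //; split => //.
by rewrite invmx1 mul1mx mulmx1.
Qed.

Lemma conj_mul (g A B : 'M[R]_n) : g \in unitmx ->
  g *m (A *m B) *m invmx g = (g *m A *m invmx g) *m (g *m B *m invmx g).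
Proof.
move=> ug; by rewrite !mulmxA -(mulmxA _ (invmx g) g) mulVmx // mulmx1.
Qed.

Lemma conj_inv (g A : 'M[R]_n) : g \in unitmx -> A \in unitmx ->
  g *m invmx A *m invmx g = invmx (g *m A *m invmx g).
Proof.
move=> ug uA; rewrite !invmxM ?invmxK ?mulmxA // ?unitmx_mul ?unitmx_inv ?ug ?uA //.
Qed.

Lemma nc_conj G H g M : closed G -> units G -> units H -> G g ->
  normal_closure R G H M -> normal_closure R G H (g *m M *m invmx g).
Proof.
move=> [G1 GM GV] uG uH Gg; have ug := uG _ Gg.
have key : forall s, (exists c h, G c /\ H h /\ s = c *m h *m invmx c) ->
   (exists c h, G c /\ H h /\ g *m s *m invmx g = c *m h *m invmx c).
  move=> s [c [h [Gc [Hh ->]]]]; exists (g *m c), h; split; first exact: GM.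
  split => //; have uc := uG _ Gc.
  by rewrite invmxM // !mulmxA.
elim => [|s y Ss _ IH|s y Ss _ IH].
  by rewrite mulmx1 mulmxV //; apply: gen_one.
  by rewrite conj_mul //; apply: gen_mulS => //; apply: key.
have us : s \in unitmx.
  by case: Ss => [c [h [Gc [Hh ->]]]]; rewrite !unitmx_mul unitmx_inv uG // uH.
rewrite conj_mul // conj_inv //; apply: gen_mulSV => //; exact: key.
Qed.

Lemma nc_mono G H1 H2 : closed G -> units G -> units H2 ->
  (forall h, H1 h -> normal_closure R G H2 h) ->
  forall M, normal_closure R G H1 M -> normal_closure R G H2 M.
Proof.
move=> cG uG uH2 sH; apply: gen_sub; first exact: nc_closed.
move=> s [g [h [Gg [Hh ->]]]]; apply: nc_conj => //; exact: sH.
Qed.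

Lemma nc_ext G1 G2 H M : (forall g, G1 g <-> G2 g) ->
  normal_closure R G1 H M -> normal_closure R G2 H M.
Proof.
move=> E; elim => [|s y Ss _ IH|s y Ss _ IH]; first exact: gen_one.
  by apply: gen_mulS => //; case: Ss => [c [h [Gc [Hh ->]]]]; exists c, h; split => //; exact/E.
by apply: gen_mulSV => //; case: Ss => [c [h [Gc [Hh ->]]]]; exists c, h; split => //; exact/E.
Qed.

Lemma nc_inG G H : closed G -> (forall h, H h -> G h) -> forall M, normal_closure R G H M -> G M.
Proof.
move=> cG sH; case: (cG) => _ GM GV; apply: gen_sub => //.
move=> s [g [h [Gg [Hh ->]]]].
apply: (GM); [apply: (GM) => //; exact: sH | exact: GV].
Qed.

Lemma nc_comm G H x x' y : closed G -> H 1%:M -> H x -> H x' -> G y ->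
  normal_closure R G H (x *m (y *m x' *m invmx y)).
Proof.
move=> cG H1 Hx Hx' Gy; apply: gen_mul; first exact: nc_sub.
by apply: gen_in; exists y, x'.
Qed.
End Grp.

Ltac mxstep := rewrite ?mulmxDl ?mulmxDr ?mulmxBl ?mulmxBr ?mulNmx ?mulmxN ?mul1mx ?mulmx1
  ?mul0mx ?mulmx0 ?scaler0 -?scalemxAl -?scalemxAr ?mulmxA ?mul_delta_mx_cond.
Ltac decb := repeat match goal with
 | |- context [?u == ?u] => rewrite eqxx
 | H : is_true (?u != ?v) |- context [?u == ?v] => rewrite (negbTE H)
 | H : is_true (?u != ?v) |- context [?v == ?u] => rewrite (eq_sym v u) (negbTE H)
 end.

Section Main.
Variable R : comUnitRingType.
Variable m : nat.
Hypothesis hm : (1 <= m)%N.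
Hypothesis h2 : (2%:R : R) \is a GRing.unit.
Local Notation nq := (nQ m).
Local Notation n := (2 * m).+1.
Definition pQ (j : 'I_nq) : 'I_nq := insubd j (partner j).
Lemma pQE j : (pQ j : nat) = partner j.
Proof. by rewrite /pQ val_insubd partner_lt. Qed.
Lemma pQK : involutive pQ.
Proof. by move=> j; apply/val_inj; rewrite /= !pQE partner_inv. Qed.
Lemma pQ0 (j : 'I_nq) : ((pQ j : nat) == 0%N) = ((j : nat) == 0%N).
Proof. by rewrite pQE partner0. Qed.
Lemma pQ_id0 (j : 'I_nq) : (j : nat) = 0%N -> pQ j = j.
Proof. by move=> j0; apply/val_inj; rewrite /= pQE j0. Qed.
Lemma pQ_neq (j : 'I_nq) : (j : nat) != 0%N -> pQ j != j.
Proof.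
move=> j0; apply/negP => /eqP/(congr1 (@nat_of_ord _)); rewrite pQE /partner (negbTE j0).
move/eqP: j0 => j0; case: (odd j) => /=; lia.
Qed.

Definition wofQ (a : 'rV[R]_nq) : 'cV[R]_nq :=
  \col_j (if (j : nat) == 0%N then 2%:R^-1 * a 0 j else a 0 (pQ j)).

Lemma GQE i j : GQ R m i j =
  if (j : nat) == 0%N then (if (i : nat) == 0%N then 2%:R else 0) else (i == pQ j)%:R.
Proof.
rewrite /GQ mxE psiE -val_eqE /= pQE.
by case: eqP; case: eqP.
Qed.

Lemma wGQ (w : 'cV[R]_nq) j :
  (w^T *m GQ R m) 0 j = if (j : nat) == 0%N then 2%:R * w j 0 else w (pQ j) 0.
Proof.
rewrite mxE (bigD1 (pQ j)) //= big1 ?addr0.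
  rewrite GQE !mxE pQ0; case: eqP => j0 /=; last by rewrite eqxx mulr1.
  by rewrite pQ_id0 // mulrC.
move=> i /negbTE ij; rewrite GQE ij; case: eqP => j0; last by rewrite mulr0.
case: eqP => i0; last by rewrite mulr0.
by move: ij; rewrite (_ : i = pQ j) ?eqxx //; apply/val_inj; rewrite /= pQE j0 i0.
Qed.

Lemma adjE (a : 'rV[R]_nq) (w : 'cV[R]_nq) :
  (forall z, bilQ R w z = (a *m z) 0 0) <-> w = wofQ a.
Proof.
have key : (forall z, bilQ R w z = (a *m z) 0 0) <-> w^T *m GQ R m = a.
  split => [H|H z]; last by rewrite /bilQ H.
  apply/matrixP => i j; rewrite (ord1 i); have := H (delta_mx j 0).
  by rewrite /bilQ -!colE !mxE.
rewrite key; split => [E|->].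
  apply/matrixP => i k; rewrite (ord1 k) mxE -E wGQ.
  case: eqP => i0; first by rewrite mulKr.
  by rewrite wGQ pQ0 pQK; case: eqP.
apply/matrixP => i j; rewrite (ord1 i) wGQ !mxE.
case: eqP => j0; first by rewrite mulVKr.
by rewrite pQ0 pQK; case: eqP.
Qed.

Lemma wofQ_sym (a b : 'rV[R]_nq) : (a *m wofQ b) 0 0 = (b *m wofQ a) 0 0.
Proof.
rewrite !mxE (reindex_inj (can_inj pQK)) /=; apply: eq_bigr => j _.
rewrite !mxE pQK pQ0; case: eqP => j0.
  by rewrite (pQ_id0 j0); apply: (@ringeq R); ring.
by rewrite mulrC.
Qed.

Lemma wofQD (a b : 'rV[R]_nq) : wofQ (a + b) = wofQ a + wofQ b.
Proof. by apply/matrixP => i j; rewrite !mxE; case: eqP => _; rewrite ?mulrDr. Qed.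

Lemma wofQ0 : wofQ 0 = 0.
Proof. by apply/matrixP => i j; rewrite !mxE; case: eqP => _; rewrite ?mulr0. Qed.

Lemma wofQ_delta0 (j : 'I_nq) (l : R) : (j : nat) = 0%N ->
  wofQ (l *: delta_mx 0 j) = (2%:R^-1 * l) *: delta_mx j 0.
Proof.
move=> j0; apply/matrixP => i k; rewrite (ord1 k) !mxE !eqxx /=.
case: eqP => i0.
  by rewrite (_ : i = j) ?eqxx ?mulrA //; apply/val_inj; rewrite /= i0 j0.
have -> : (i == j) = false by apply/eqP => E; apply: i0; rewrite E j0.
have -> : (pQ i == j) = false by apply/eqP => E; apply: i0; rewrite -(pQK i) E pQE j0.
by rewrite !mulr0.
Qed.

Lemma wofQ_deltaN (j : 'I_nq) (l : R) : (j : nat) != 0%N ->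
  wofQ (l *: delta_mx 0 j) = l *: delta_mx (pQ j) 0.
Proof.
move=> j0; apply/matrixP => i k; rewrite (ord1 k) !mxE !eqxx /= andbT.
have -> : (pQ i == j) = (i == pQ j) by apply/eqP/eqP => [<-|->]; rewrite pQK.
case: eqP => i0 //.
have -> : (i == j) = false by apply/eqP => E; move: j0; rewrite -E i0.
have -> : (i == pQ j) = false.
  by apply/eqP => E; move: j0; rewrite -pQ0 -E i0.
by rewrite !mulr0.
Qed.

Lemma leQ : (nq <= n)%N. Proof. rewrite /nQ; lia. Qed.
Definition wid (j : 'I_nq) : 'I_n := widen_ord leQ j.

Definition rowpad (a : 'rV[R]_nq) : 'rV[R]_n := \row_c qrow R a c.
Definition colpad (w : 'cV[R]_nq) : 'cV[R]_n := \col_r qcol R w r.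

Lemma qrow_wid a i : qrow R a (wid i) = a 0 i.
Proof. by rewrite /qrow /= valK. Qed.
Lemma qcol_wid w i : qcol R w (wid i) = w i 0.
Proof. by rewrite /qcol /= valK. Qed.
Lemma qrow_out a (c : 'I_n) : (nq <= c)%N -> qrow R a c = 0.
Proof. by move=> h; rewrite /qrow insubN // -leqNgt. Qed.
Lemma qcol_out w (c : 'I_n) : (nq <= c)%N -> qcol R w c = 0.
Proof. by move=> h; rewrite /qcol insubN // -leqNgt. Qed.

Lemma rowpadD a b : rowpad (a + b) = rowpad a + rowpad b.
Proof. by apply/matrixP => i c; rewrite !mxE /qrow; case: insubP => [j _ _|_] /=; rewrite ?mxE ?addr0. Qed.
Lemma colpadD a b : colpad (a + b) = colpad a + colpad b.
Proof. by apply/matrixP => i c; rewrite !mxE /qcol; case: insubP => [j _ _|_] /=; rewrite ?mxE ?addr0. Qed.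
Lemma rowpad0 : rowpad 0 = 0.
Proof. by apply/matrixP => i c; rewrite !mxE /qrow; case: insubP => [j _ _|_] /=; rewrite ?mxE. Qed.
Lemma colpad0 : colpad 0 = 0.
Proof. by apply/matrixP => i c; rewrite !mxE /qcol; case: insubP => [j _ _|_] /=; rewrite ?mxE. Qed.

Lemma rowpad_delta j l : rowpad (l *: delta_mx 0 j) = l *: delta_mx 0 (wid j).
Proof.
apply/matrixP => i c; rewrite (ord1 i) !mxE /qrow; case: insubP => [k _ kc|nc] /=; rewrite ?mxE.
  have -> : (c == wid j) = (k == j).
    by apply/eqP/eqP => E; apply/val_inj; [rewrite kc E | rewrite /= -kc E].
  by [].
have -> : (c == wid j) = false by apply/eqP => E; move: nc; rewrite E /= ltn_ord.
by rewrite mulr0.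
Qed.
Lemma colpad_delta j l : colpad (l *: delta_mx j 0) = l *: delta_mx (wid j) 0.
Proof.
apply/matrixP => c i; rewrite (ord1 i) !mxE /qcol; case: insubP => [k _ kc|nc] /=; rewrite ?mxE.
  have -> : (c == wid j) = (k == j).
    by apply/eqP/eqP => E; apply/val_inj; [rewrite kc E | rewrite /= -kc E].
  by [].
have -> : (c == wid j) = false by apply/eqP => E; move: nc; rewrite E /= ltn_ord.
by rewrite mulr0.
Qed.

Lemma pad_mul a w : (rowpad a *m colpad w) 0 0 = (a *m w) 0 0.
Proof.
rewrite !mxE (bigID (fun c : 'I_n => (c < nq)%N)) /= [X in _ + X]big1 ?addr0.
  rewrite (big_ord_narrow leQ); apply: eq_bigr => i _; rewrite !mxE.
  by rewrite -[widen_ord _ _]/(wid i) qrow_wid qcol_wid.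
by move=> c; rewrite -leqNgt => h; rewrite !mxE qcol_out ?mulr0.
Qed.

Definition ox : 'I_n := inord (2 * m - 1).
Definition of_ : 'I_n := inord (2 * m).
Lemma oxE : (ox : nat) = (2 * m - 1)%N. Proof. by rewrite inordK //; lia. Qed.
Lemma ofE : (of_ : nat) = (2 * m)%N. Proof. by rewrite inordK //; lia. Qed.
Lemma eq_ox (c : 'I_n) : (c == ox) = ((c : nat) == idx_x m).
Proof. by rewrite -val_eqE /= oxE. Qed.
Lemma eq_of (c : 'I_n) : (c == of_) = ((c : nat) == idx_f m).
Proof. by rewrite -val_eqE /= ofE. Qed.

Lemma E_alphaE a w : E_alpha R a w = Egen ox of_ (rowpad a) (colpad w) (2%:R^-1 * (a *m w) 0 0).
Proof.
apply/matrixP => r c; rewrite !mxE !big_ord1 !mxE !eqxx /= ?andbT eq_ox eq_of.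
by case: (_ == idx_f m); case: (_ == idx_x m) => /=; apply: (@ringeq R); ring.
Qed.

Lemma E_betaE b w : E_beta R b w = Egen of_ ox (rowpad b) (colpad w) (2%:R^-1 * (b *m w) 0 0).
Proof.
apply/matrixP => r c; rewrite !mxE !big_ord1 !mxE !eqxx /= ?andbT eq_ox eq_of.
by case: (_ == idx_f m); case: (_ == idx_x m) => /=; apply: (@ringeq R); ring.
Qed.


Lemma add00 (X Y : 'M[R]_1) : (X + Y) 0 0 = X 0 0 + Y 0 0. Proof. by rewrite mxE. Qed.

Definition Eg (p q : 'I_n) (a : 'rV[R]_nq) : 'M[R]_n :=
  Egen p q (rowpad a) (colpad (wofQ a)) (2%:R^-1 * (a *m wofQ a) 0 0).

Section EgP.
Variables p q : 'I_n.
Hypotheses (hp : (nq <= p)%N) (hq : (nq <= q)%N) (qp : q != p).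

Lemma Eg_add a b : Eg p q a *m Eg p q b = Eg p q (a + b).
Proof.
rewrite /Eg Egen_mul //; last first.
- by rewrite -colE; apply/matrixP => i j; rewrite !mxE qrow_out.
- by rewrite -rowE; apply/matrixP => i j; rewrite !mxE qcol_out.
rewrite rowpadD wofQD colpadD pad_mul; congr Egen.
rewrite mulmxDl !mulmxDr !add00 (wofQ_sym b a).
set A := (a *m wofQ a) 0 0; set B := (b *m wofQ b) 0 0; set C := (a *m wofQ b) 0 0.
have hC : C = 2%:R^-1 * (C + C) by rewrite -mulr2n -(mulr_natl C 2) mulKr.
rewrite [in LHS]hC; apply: (@ringeq R); ring.
Qed.

Lemma Eg0 : Eg p q 0 = 1%:M.
Proof.
rewrite /Eg wofQ0 rowpad0 colpad0 mul0mx /Egen !mul0mx mulmx0 mxE mulr0 scale0r.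
by rewrite !subr0 addr0.
Qed.

Lemma nq_pos : (0 < nq)%N. Proof. rewrite /nQ; lia. Qed.

Lemma Eg_piece0 (j : 'I_nq) l : (j : nat) = 0%N ->
  Eg p q (l *: delta_mx 0 j) = S1 ord0 p q (- (2%:R^-1 * l)).
Proof.
move=> j0; rewrite /Eg wofQ_delta0 // rowpad_delta colpad_delta.
have -> : wid j = ord0 by apply/val_inj; rewrite /= j0.
rewrite -scalemxAl -scalemxAr mul_delta_mx !mxE !eqxx /= mulr1.
have h1 : (ord0 : 'I_n) != p by apply/eqP => /(congr1 val) /= E; move: hp; rewrite -E /nQ; lia.
have h2' : (ord0 : 'I_n) != q by apply/eqP => /(congr1 val) /= E; move: hq; rewrite -E /nQ; lia.
have h5 : p != q by rewrite eq_sym.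
rewrite /S1 mulrN mulVKr //.
rewrite /Egen; do 3 (mxstep; decb; rewrite ?mulr0n ?mulr1n).
apply/matrixP => r c; rewrite !mxE; apply: (@ringeq R); ring.
Qed.

Lemma Eg_piece (j : 'I_nq) l : (j : nat) != 0%N ->
  Eg p q (l *: delta_mx 0 j) = LL (wid (pQ j)) (wid j) p q l.
Proof.
move=> j0; rewrite /Eg wofQ_deltaN // rowpad_delta colpad_delta.
have nj : (wid j == wid (pQ j)) = false.
  apply/negbTE; move: (pQ_neq j0); apply: contra => /eqP/(congr1 val) /= E.
  by apply/eqP/val_inj; rewrite /= E.
rewrite -scalemxAl -scalemxAr mul_delta_mx_cond eq_sym (negbTE (pQ_neq j0)).
rewrite mulr0n !mxE !mulr0 /Egen /LL scale0r subr0.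
do 2 mxstep; decb; rewrite ?mulr1n ?mulr0n.
apply/matrixP => r c; rewrite !mxE; apply: (@ringeq R); ring.
Qed.

Lemma Eg_in (T : 'M[R]_n -> Prop) (P : R -> Prop) : closed T ->
  (forall j l, P l -> T (Eg p q (l *: delta_mx 0 j))) ->
  forall a : 'rV[R]_nq, (forall j, P (a 0 j)) -> T (Eg p q a).
Proof.
move=> [T1 TM _] hT a Pa; rewrite [a in Eg p q a]matrix_sum_delta big_ord1.
apply: (big_ind (fun x => T (Eg p q x))).
- by rewrite Eg0.
- by move=> x y Tx Ty; rewrite -Eg_add; apply: TM.
- by move=> j _; apply: hT.
Qed.
End EgP.
Lemma inv_eq (A B : 'M[R]_n) : A *m B = 1%:M -> invmx A = B.
Proof.
move=> AB; have [uA _] := mulmx1_unit AB.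
by rewrite -[invmx A]mulmx1 -AB mulmxA mulVmx // mul1mx.
Qed.

Lemma ord_neq (a b : 'I_n) : (a : nat) != b -> a != b.
Proof. by apply: contraNneq => ->. Qed.

Lemma F1E i l (P Q : 'I_n) : (P : nat) = (2 * i).-1 -> (Q : nat) = (2 * i)%N ->
  F1 R m i l = S1 ord0 P Q l.
Proof.
move=> hP hQ; apply/matrixP => r c; rewrite !mxE -!val_eqE /= hP hQ.
apply: (@ringeq R); ring.
Qed.

Lemma F2E i l (P Q : 'I_n) : (P : nat) = (2 * i).-1 -> (Q : nat) = (2 * i)%N ->
  F2 R m i l = S1 ord0 Q P l.
Proof.
move=> hP hQ; apply/matrixP => r c; rewrite !mxE -!val_eqE /= hP hQ.
apply: (@ringeq R); ring.
Qed.


Lemma F1m l : F1 R m m l = S1 ord0 ox of_ l.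
Proof. by apply: F1E; rewrite ?oxE ?ofE //; lia. Qed.
Lemma F2m l : F2 R m m l = S1 ord0 of_ ox l.
Proof. by apply: F2E; rewrite ?oxE ?ofE //; lia. Qed.

Lemma wid_val j : (wid j : nat) = j. Proof. by []. Qed.

Lemma partner_facts (j : 'I_nq) : (j : nat) != 0%N ->
  [/\ (0 < partner j)%N, (partner j < nq)%N & partner j != j].
Proof.
move=> j0; split; first by rewrite lt0n partner0.
  exact: partner_lt.
by rewrite -pQE; apply/eqP => E; move/eqP: (pQ_neq j0); apply; apply/val_inj.
Qed.

Ltac dist := apply: ord_neq; rewrite ?wid_val ?pQE ?oxE ?ofE /=; unfold nQ in *; lia.

Lemma piece_F (j : 'I_nq) l : (j : nat) != 0%N -> exists2 i, (1 <= i <= m)%N &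
  (S1 ord0 (wid (pQ j)) (wid j) l = F1 R m i l \/ S1 ord0 (wid (pQ j)) (wid j) l = F2 R m i l).
Proof.
move=> j0; have jn := ltn_ord j; rewrite {2}/nQ in jn.
case: (parity j) => [[k jk]|[k jk]].
  exists k.+1; first by lia.
  right; apply/esym/F2E; rewrite wid_val ?pQE jk ?partner_odd; lia.
exists k; first by move: j0; rewrite jk; lia.
left; apply/esym/F1E; rewrite wid_val ?pQE jk ?partner_even; lia.
Qed.

Lemma F_piece i l : (1 <= i)%N -> (i < m)%N ->
  (exists2 j : 'I_nq, (j : nat) != 0%N & F1 R m i l = S1 ord0 (wid (pQ j)) (wid j) l) /\
  (exists2 j : 'I_nq, (j : nat) != 0%N & F2 R m i l = S1 ord0 (wid (pQ j)) (wid j) l).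
Proof.
move=> i1 im; have h1 : (2 * i < nq)%N by rewrite /nQ; lia.
have h1' : ((2 * i).-1 < nq)%N by rewrite /nQ; lia.
split.
  exists (Ordinal h1); first by rewrite /=; lia.
  apply: F1E => /=; last by [].
  by rewrite pQE /= mulnC partner_even.
exists (Ordinal h1'); first by rewrite /=; lia.
apply: F2E => /=; first by [].
rewrite pQE /=.
have -> : ((2 * i).-1 = (i.-1 * 2).+1)%N by lia.
rewrite partner_odd; lia.
Qed.


Lemma hox : (nq <= ox)%N. Proof. rewrite oxE /nQ; lia. Qed.
Lemma hof : (nq <= of_)%N. Proof. rewrite ofE /nQ; lia. Qed.
Lemma ofox : of_ != ox. Proof. dist. Qed.
Lemma oxof : ox != of_. Proof. dist. Qed.

Lemma S1_unit (p q : 'I_n) (l : R) : ord0 != p -> ord0 != q -> p != q -> S1 ord0 p q l \in unitmx.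
Proof. by move=> a b c; case: (mulmx1_unit (S1inv l a b c)). Qed.

Lemma Fgens_unit (P : R -> Prop) M : EO_odd_gens R m P M -> M \in unitmx.
Proof.
case=> i [l [/andP[i1 im] _ hM]].
have hP : ((2 * i).-1 < n)%N by lia.
have hQ : (2 * i < n)%N by lia.
case: hM => ->.
  by rewrite (@F1E i l (Ordinal hP) (Ordinal hQ)) //; apply: S1_unit; dist.
by rewrite (@F2E i l (Ordinal hP) (Ordinal hQ)) //; apply: S1_unit; dist.
Qed.

Lemma Eg_unit (p q : 'I_n) a : (nq <= p)%N -> (nq <= q)%N -> q != p -> Eg p q a \in unitmx.
Proof.
move=> hp hq qp; have := Eg_add hp hq qp a (- a).
by rewrite subrr Eg0 => /mulmx1_unit [].
Qed.

Lemma Qgens_unit (P : R -> Prop) M : EOQH_gens R m P M -> M \in unitmx.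
Proof.
case=> [[a [w [adj [_ ->]]]]|[b [w [adj [_ ->]]]]]; move/adjE: adj => ->.
  by rewrite E_alphaE; apply: (Eg_unit _ hox hof ofox).
by rewrite E_betaE; apply: (Eg_unit _ hof hox oxof).
Qed.

Lemma Eg_gens_x (P : R -> Prop) a : (forall z : 'cV[R]_nq, P ((a *m z) 0 0)) -> EOQH_gens R m P (Eg ox of_ a).
Proof.
move=> Pa; left; exists a, (wofQ a); split; first exact/adjE.
by split => //; rewrite E_alphaE.
Qed.
Lemma Eg_gens_f (P : R -> Prop) a : (forall z : 'cV[R]_nq, P ((a *m z) 0 0)) -> EOQH_gens R m P (Eg of_ ox a).
Proof.
move=> Pa; right; exists a, (wofQ a); split; first exact/adjE.
by split => //; rewrite E_betaE.
Qed.

Lemma uG2 : units (EO_odd R m).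
Proof. by apply: gen_units => M; apply: Fgens_unit. Qed.
Lemma uG1 : units (EOQH R m).
Proof. by apply: gen_units => M; apply: Qgens_unit. Qed.

Section Ideal.
Variable I : {pred R}.
Hypotheses (I0 : 0 \in I) (ID : forall x y, x \in I -> y \in I -> x + y \in I)
  (IM : forall r x, x \in I -> r * x \in I).

Lemma rowI (a : 'rV[R]_nq) : (forall j, a 0 j \in I) -> forall z : 'cV[R]_nq, (a *m z) 0 0 \in I.
Proof.
move=> Ia z; rewrite mxE; apply: (big_ind (fun x => x \in I)) => // j _.
rewrite mulrC; exact: IM.
Qed.

Lemma deltaI (j : 'I_nq) l : l \in I -> forall z : 'cV[R]_nq, ((l *: delta_mx (0 : 'I_1) j) *m z) 0 0 \in I.
Proof. by move=> lI; apply: rowI => k; rewrite !mxE mulrC; apply: IM. Qed.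

Local Notation G2 := (EO_odd R m).
Local Notation H2 := (EO_odd_ideal R m I).
Local Notation G1 := (EOQH R m).
Local Notation H1 := (EOQH_ideal R m I).

Lemma uH2 : units H2.
Proof. by apply: gen_units => M; apply: Fgens_unit. Qed.
Lemma uH1 : units H1.
Proof. by apply: gen_units => M; apply: Qgens_unit. Qed.

Lemma L1 (P : R -> Prop) : (forall l, P l -> l \in I) ->
  forall M, EOQH_gens R m P M -> normal_closure R G2 H2 M.
Proof.
move=> PI M hM.
have cG2 : closed G2 by apply: gen_closed => M'; apply: Fgens_unit.
have cT : closed (normal_closure R G2 H2) := nc_closed uG2 uH2.
have H21 : H2 1%:M by apply: gen_one.
have piece : forall X F : 'I_n, (nq <= X)%N -> (nq <= F)%N -> F != X ->
   (forall a, a \in I -> H2 (S1 ord0 X F a)) ->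
   forall j l, l \in I -> normal_closure R G2 H2 (Eg X F (l *: delta_mx 0 j)).
  move=> X F hX hF FX hS j l lI.
  have [j0|j0] := eqVneq (j : nat) 0%N.
    rewrite (Eg_piece0 hX hF FX _ j0); apply: nc_sub => //; apply: hS.
    by rewrite -mulNr; apply: IM.
  rewrite Eg_piece //.
  have [pf1 pf2 pf3] := partner_facts j0.
  have jlt := ltn_ord j.
  have XFn : (X : nat) != F by rewrite eq_sym.
  set P' := wid (pQ j); set Q' := wid j.
  set a := - (2%:R^-1 * l).
  have E : S1 ord0 X F a *m S1 ord0 P' Q' 1 =
      LL P' Q' X F (- (2%:R * a * 1)) *m S1 ord0 P' Q' 1 *m S1 ord0 X F a.
    by apply: commA; dist.
  have e2 : - (2%:R * a * 1) = l by rewrite /a mulr1 mulrN opprK mulrA divrr // mul1r.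
  rewrite e2 in E.
  have uy : S1 ord0 P' Q' (1 : R) \in unitmx by apply: S1_unit; dist.
  have -> : LL P' Q' X F l =
      S1 ord0 X F a *m (S1 ord0 P' Q' 1 *m S1 ord0 X F (- a) *m invmx (S1 ord0 P' Q' 1)).
    rewrite !mulmxA E -(mulmxA _ (S1 ord0 X F a)) S1inv; try dist.
    by rewrite mulmx1 mulmxK.
  apply: nc_comm => //.
  - by apply: hS; rewrite /a -mulNr; apply: IM.
  - by apply: hS; rewrite /a opprK; apply: IM.
  - have [i hi [E'|E']] := piece_F 1 j0; rewrite E'; apply: gen_in; exists i, 1; split => //.
    + by left.
    + by right.
have gx : forall c, c \in I -> H2 (S1 ord0 ox of_ c).
  move=> c cI; apply: gen_in; exists m, c; split => //; first by rewrite hm leqnn.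
  by left; rewrite F1m.
have gf : forall c, c \in I -> H2 (S1 ord0 of_ ox c).
  move=> c cI; apply: gen_in; exists m, c; split => //; first by rewrite hm leqnn.
  by right; rewrite F2m.
case: hM => [[a [w [adj [Pa ->]]]]|[a [w [adj [Pa ->]]]]]; move/adjE: (adj) => ew; rewrite ew.
  rewrite E_alphaE; apply: (Eg_in (P := fun l => l \in I) hox hof ofox) => //.
    by apply: piece => //; [exact: hox | exact: hof | exact: ofox].
  by move=> j; apply: PI; have := Pa (delta_mx j 0); rewrite -colE mxE.
rewrite E_betaE; apply: (Eg_in (P := fun l => l \in I) hof hox oxof) => //.
  by apply: piece => //; [exact: hof | exact: hox | exact: oxof].
by move=> j; apply: PI; have := Pa (delta_mx j 0); rewrite -colE mxE.
Qed.


Lemma L2 (P : R -> Prop) : (forall l, P l -> l \in I) ->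
  forall M, EO_odd_gens R m P M -> normal_closure R G1 H1 M.
Proof.
move=> PI M [i [l [/andP [i1 im] Pl hM]]]; have lI := PI _ Pl.
have cG1 : closed G1 by apply: gen_closed => M'; apply: Qgens_unit.
have cT : closed (normal_closure R G1 H1) := nc_closed uG1 uH1.
have H11 : H1 1%:M by apply: gen_one.
have hq0 : (0 < nq)%N by rewrite /nQ; lia.
pose j0 : 'I_nq := Ordinal hq0.
have Ex : forall c, S1 ord0 ox of_ c = Eg ox of_ ((- (2%:R * c)) *: delta_mx 0 j0).
  move=> c; rewrite (Eg_piece0 hox hof ofox) //; congr S1.
  by rewrite mulrN opprK mulrA mulVr // mul1r.
have Ef : forall c, S1 ord0 of_ ox c = Eg of_ ox ((- (2%:R * c)) *: delta_mx 0 j0).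
  move=> c; rewrite (Eg_piece0 hof hox oxof) //; congr S1.
  by rewrite mulrN opprK mulrA mulVr // mul1r.
have gx : forall c, c \in I -> H1 (S1 ord0 ox of_ c).
  move=> c cI; rewrite Ex; apply: gen_in; apply: Eg_gens_x; apply: deltaI.
  by rewrite -mulNr; apply: IM.
have gf : forall c, c \in I -> H1 (S1 ord0 of_ ox c).
  move=> c cI; rewrite Ef; apply: gen_in; apply: Eg_gens_f; apply: deltaI.
  by rewrite -mulNr; apply: IM.
case: (ltnP i m) => him; last first.
  have ei : i = m by apply/eqP; rewrite eqn_leq im him.
  rewrite ei in hM.
  by case: hM => ->; [rewrite F1m | rewrite F2m]; apply: nc_sub => //; [apply: gx | apply: gf].
have key : forall j : 'I_nq, (j : nat) != 0%N ->
    normal_closure R G1 H1 (S1 ord0 (wid (pQ j)) (wid j) l).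
  move=> j jn; have [pf1 pf2 pf3] := partner_facts jn; have jlt := ltn_ord j.
  have E : S1 ord0 ox of_ 1 *m LL (wid (pQ j)) (wid j) of_ ox l *m S1 ord0 ox of_ (- 1) =
      S1 ord0 (wid (pQ j)) (wid j) (1 * l) *m LL (wid (pQ j)) (wid j) ox of_ (- (1 ^+ 2 * l)) *m LL (wid (pQ j)) (wid j) of_ ox l.
    by apply: commB; dist.
  rewrite mul1r expr1n mul1r in E.
  have -> : S1 ord0 (wid (pQ j)) (wid j) l = (S1 ord0 ox of_ 1 *m LL (wid (pQ j)) (wid j) of_ ox l *m invmx (S1 ord0 ox of_ 1))
      *m LL (wid (pQ j)) (wid j) of_ ox (- l) *m LL (wid (pQ j)) (wid j) ox of_ (- - l).
    rewrite (inv_eq (S1inv 1 _ _ _)); try dist.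
    rewrite E -(mulmxA _ (LL (wid (pQ j)) (wid j) of_ ox l)) LLinv; try dist.
    rewrite mulmx1 -mulmxA LLinv; try dist.
    by rewrite mulmx1.
  apply: gen_mul; first apply: gen_mul.
  - apply: gen_in; exists (S1 ord0 ox of_ 1), (LL (wid (pQ j)) (wid j) of_ ox l); split.
      by rewrite Ex; apply: gen_in; apply: Eg_gens_x.
    split => //; rewrite -(Eg_piece of_ ox l jn); apply: gen_in; apply: Eg_gens_f.
    exact: deltaI.
  - apply: nc_sub => //; rewrite -(Eg_piece of_ ox (- l) jn); apply: gen_in; apply: Eg_gens_f.
    by apply: deltaI; rewrite -mulN1r; apply: IM.
  - apply: nc_sub => //; rewrite opprK -(Eg_piece ox of_ l jn); apply: gen_in; apply: Eg_gens_x.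
    exact: deltaI.
have [[j1 j10 E1] [j2 j20 E2]] := F_piece l i1 him.
by case: hM => ->; [rewrite E1 | rewrite E2]; apply: key.
Qed.

End Ideal.

Lemma G12 M : EOQH R m M -> EO_odd R m M.
Proof.
have cG2 : closed (EO_odd R m) by apply: gen_closed => M'; apply: Fgens_unit.
apply: gen_sub => // s hs.
apply: (nc_inG (H := EO_odd_ideal R m (fun _ : R => true))) => //.
  apply: gen_sub => // s' [i [l [hi _ hs']]]; apply: gen_in; exists i, l; split => //.
by apply: (@L1 (fun _ : R => true) _ _ (fun _ => True) _ s hs).
Qed.

Lemma G21 M : EO_odd R m M -> EOQH R m M.
Proof.
have cG1 : closed (EOQH R m) by apply: gen_closed => M'; apply: Qgens_unit.
apply: gen_sub => // s hs.
apply: (nc_inG (H := EOQH_ideal R m (fun _ : R => true))) => //.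
  apply: gen_sub => // s'.
  case=> [[a [w [adj [_ ->]]]]|[a [w [adj [_ ->]]]]]; apply: gen_in; [left|right]; by exists a, w.
by apply: (@L2 (fun _ : R => true) _ _ _ (fun _ => True) _ s hs).
Qed.

Lemma final (I : {pred R}) (I0 : 0 \in I) (ID : forall x y, x \in I -> y \in I -> x + y \in I)
  (IM : forall r x, x \in I -> r * x \in I) M : EOQH_rel R m I M <-> EO_odd_rel R m I M.
Proof.
have cG1 : closed (EOQH R m) by apply: gen_closed => M'; apply: Qgens_unit.
have cG2 : closed (EO_odd R m) by apply: gen_closed => M'; apply: Fgens_unit.
split => hM.
  apply: (nc_mono (H1 := EOQH_ideal R m I)) => //.
  - exact: uG2.
  - exact: uH2.
  - apply: gen_sub; first exact: nc_closed uG2 (@uH2 I).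
    by move=> s hs; apply: (@L1 I I0 IM (fun l => l \in I) (fun _ h => h) s hs).
  - by apply: nc_ext hM => g; split; [apply: G12 | apply: G21].
apply: (nc_mono (H1 := EO_odd_ideal R m I)) => //.
- exact: uG1.
- exact: uH1.
- apply: gen_sub; first exact: nc_closed uG1 (@uH1 I).
  by move=> s hs; apply: (@L2 I I0 ID IM (fun l => l \in I) (fun _ h => h) s hs).
- by apply: nc_ext hM => g; split; [apply: G21 | apply: G12].
Qed.
End Main.

Unset Implicit Arguments.
Theorem mainTheorem6 (R : comUnitRingType) (I : {pred R})
  (I0 : 0 \in I)
  (ID : forall x y, x \in I -> y \in I -> x + y \in I)
  (IM : forall r x, x \in I -> r * x \in I)
  (h2 : (2%:R : R) \is a GRing.unit)
  (m : nat) (hm : (1 <= m)%N) :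
  forall M : 'M[R]_((2 * m).+1), EOQH_rel R m I M <-> EO_odd_rel R m I M.
Proof. by move=> M; apply: final. Qed.
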